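(* Let $G$ be a finite simple graph on the vertex set $[d]=\{1,\dots,d\}$, let $k\ge 1$, and let $f,g$ be $k$-colorings of $G$. Then $f\sim_k g$ if and only if ${\bf x}_f-{\bf x}_g\in J_G$.
   Context: A $k$-coloring of a graph $H$ is a map $f:V(H)\to[k]$ (not necessarily surjective) with $f(u)\neq f(v)$ for every edge $\{u,v\}$ of $H$. Given a $k$-coloring $f$ of $H$ and colors $1\le i<j\le k$, let $C$ be a connected component of the induced subgraph $H[f^{-1}(i)\cup f^{-1}(j)]$; the coloring that agrees with $f$ outside $C$ and interchanges the colors $i$ and $j$ on $C$ is said to be obtained from $f$ by a Kempe switching. Two $k$-colorings $f,g$ of $H$ are Kempe equivalent, written $f\sim_k g$, if there is a finite sequence $f=f_0,f_1,\dots,f_s=g$ of $k$-colorings of $H$ with each $f_i$ obtained from $f_{i-1}$ by a Kempe switching. A stable set of $G$ is a subset $S\subseteq[d]$ containing no edge of $G$ (so $\emptyset$ and all singletons are stable); $S(G)$ denotes the set of stable sets. Let $\mathbb{K}$ be a field and $R[G]=\mathbb{K}[x_S : S\in S(G)]$ the polynomial ring with one variable of degree $1$ for each stable set. For a $k$-coloring $f$ of an induced subgraph $G[W]$ ($W\subseteq[d]$) put ${\bf x}_f=\prod_{\ell=1}^k x_{f^{-1}(\ell)}$ (each $f^{-1}(\ell)$ is a stable set, possibly empty). The $2$-coloring ideal $J_G\subseteq R[G]$ is the ideal generated by all ${\bf x}_f-{\bf x}_g$ where $f,g$ are $2$-colorings of the same induced subgraph $G[W]$ of $G$ (equivalently,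 by all $x_{S_1}x_{S_2}-x_{S_3}x_{S_4}$ with $S_i\in S(G)$, $S_1\cap S_2=S_3\cap S_4=\emptyset$ and $S_1\cup S_2=S_3\cup S_4$). *)

(* Defs.v *)
From HB Require Import structures.
From mathcomp Require Import all_boot all_order all_algebra.
From mathcomp Require Import mpoly.
Set Implicit Arguments. Unset Strict Implicit. Unset Printing Implicit Defensive.
Import GRing.Theory.
Local Open Scope ring_scope.

(* A finite simple graph G on [d] is encoded by e : rel 'I_d (symmetric,
   irreflexive, assumed in the theorem).  Colors [k] are 'I_k. *)

Definition coloring (d k : nat) (e : rel 'I_d) (f : 'I_d -> 'I_k) : Prop :=
  forall u v, e u v -> f u != f v.

Definition stable (d : nat) (e : rel 'I_d) (S : {set 'I_d}) : bool :=
  [forall u in S, forall v in S, ~~ e u v].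

Definition stab (d : nat) (e : rel 'I_d) := {S : {set 'I_d} | stable e S}.

(* R[G] = K[x_S : S stable] *)
Definition RG (K : fieldType) (d : nat) (e : rel 'I_d) :=
  {mpoly K[#|{: stab e}|]}.

(* the variable x_S for S stable (junk value 0 for non-stable S, never used
   below since color classes of colorings are stable) *)
Definition xS (K : fieldType) (d : nat) (e : rel 'I_d) (S : {set 'I_d})
  : RG K e :=
  if @insub _ (stable e) (stab e) S is Some s then 'X_(enum_rank s) else 0.

Definition xmon (K : fieldType) (d k : nat) (e : rel 'I_d) (f : 'I_d -> 'I_k)
  : RG K e := \prod_(l < k) xS K e [set v | f v == l].

Definition coloring_on (d k : nat) (e : rel 'I_d) (W : {set 'I_d})
  (f : 'I_d -> 'I_k) : Prop :=
  forall u v, u \in W -> v \in W -> e u v -> f u != f v.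

Definition xmon_on (K : fieldType) (d k : nat) (e : rel 'I_d) (W : {set 'I_d})
  (f : 'I_d -> 'I_k) : RG K e := \prod_(l < k) xS K e [set v in W | f v == l].

Definition J_gens (K : fieldType) (d : nat) (e : rel 'I_d) (p : RG K e) : Prop :=
  exists (W : {set 'I_d}) (f g : 'I_d -> 'I_2),
    [/\ coloring_on e W f, coloring_on e W g &
        p = xmon_on K e W f - xmon_on K e W g].

Definition in_ideal (R : comRingType) (P : R -> Prop) (p : R) : Prop :=
  exists (n : nat) (c gs : 'I_n -> R),
    (forall i, P (gs i)) /\ p = \sum_(i < n) c i * gs i.

Definition J_G (K : fieldType) (d : nat) (e : rel 'I_d) : RG K e -> Prop :=
  in_ideal (@J_gens K d e).

Definition component_of (d : nat) (e : rel 'I_d) (A C : {set 'I_d}) : Prop :=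
  exists2 v, v \in A &
    C = [set w | connect [rel x y | [&& e x y, x \in A & y \in A]] v w].

Definition kempe_switch (d k : nat) (e : rel 'I_d) (f g : 'I_d -> 'I_k) : Prop :=
  exists (i j : 'I_k) (C : {set 'I_d}),
    [/\ (i < j)%N,
        component_of e [set v | (f v == i) || (f v == j)] C &
        forall v, g v = if v \in C then
                          (if f v == i then j else i)
                        else f v].

Inductive kempe_equiv (d k : nat) (e : rel 'I_d) :
    ('I_d -> 'I_k) -> ('I_d -> 'I_k) -> Prop :=
  | kempe_refl f : coloring e f -> kempe_equiv e f f
  | kempe_step f g h : coloring e f -> coloring e g -> kempe_switch e f g ->
      kempe_equiv e g h -> kempe_equiv e f h.

Arguments xS K {d} e S.
Arguments xmon K {d k} e f.
Arguments xmon_on K {d k} e W f.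
Arguments J_gens K {d} e p.
Arguments J_G K {d} e _.

(* Main.v *)
Require Import Defs.
From HB Require Import structures.
From mathcomp Require Import all_boot all_order all_algebra all_fingroup.
From mathcomp Require Import mpoly zify.
From Stdlib Require Import FunctionalExtensionality ClassicalEpsilon.
Set Implicit Arguments. Unset Strict Implicit. Unset Printing Implicit Defensive.
Import GRing.Theory.

Section Comb.
Variables (d k : nat) (e : rel 'I_d).
Hypothesis e_sym : forall u v, e u v = e v u.

Lemma kempe_trans (f g h : 'I_d -> 'I_k) :
  kempe_equiv e f g -> kempe_equiv e g h -> kempe_equiv e f h.
Proof.
elim=> [f0 _ //|f0 g0 h0 hf hg hs _ IH] /IH H; exact: kempe_step hs H.
Qed.

Lemma kempe_eqfun (f g : 'I_d -> 'I_k) : coloring e f -> f =1 g -> kempe_equiv e f g.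
Proof.
move=> hf /functional_extensionality <-; exact: kempe_refl.
Qed.

Definition inij (i j x : 'I_k) := (x == i) || (x == j).

Lemma recolor_lt (i j : 'I_k) : (i < j)%N -> forall N (h h' : 'I_d -> 'I_k),
  #|[set v | h v != h' v]| <= N -> coloring e h -> coloring e h' ->
  (forall v, inij i j (h v) = inij i j (h' v)) ->
  (forall v, ~~ inij i j (h v) -> h' v = h v) -> kempe_equiv e h h'.
Proof.
move=> ltij; have nij : i != j by rewrite neq_ltn ltij.
elim=> [|N IH] h h' hN hh hh' Hin Hout.
  apply: kempe_eqfun => // v; apply/eqP; move: hN; rewrite leqn0 cards_eq0.
  by move/eqP/setP => /(_ v); rewrite !inE => /negbFE.
have [S0|[v]] := set_0Vmem [set v | h v != h' v].
  apply: kempe_eqfun => // w; apply/eqP; move/setP: S0 => /(_ w).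
  by rewrite !inE => /negbFE.
rewrite inE => hv.
pose A := [set w | (h w == i) || (h w == j)].
pose rA := [rel x y | [&& e x y, x \in A & y \in A]].
pose C := [set w | connect rA v w].
pose P := [pred w | (h w != h' w) && (w \in A)].
have vA : v \in A.
  rewrite inE; apply: contraR hv => H; by rewrite (Hout v H).
have clP : closed rA P.
  move=> x y /= /and3P [exy xA yA]; rewrite -!topredE /= xA yA !andbT.
  have hxy := hh _ _ exy; have hxy' := hh' _ _ exy.
  move: xA yA; rewrite !inE => xA yA.
  have xA' : inij i j (h' x) by rewrite -Hin.
  have yA' : inij i j (h' y) by rewrite -Hin.
  rewrite /inij in xA' yA'.
  case/orP: xA => /eqP hx; case/orP: yA => /eqP hy;
  case/orP: xA' => /eqP hx'; case/orP: yA' => /eqP hy';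
  rewrite hx hy hx' hy' in hxy hxy' *;
  by move: hxy hxy'; rewrite ?eqxx ?(eq_sym j i) ?(negbTE nij).
have PC : forall w, w \in C -> P w.
  move=> w; rewrite inE => Hc; change (w \in P).
  by rewrite -(closed_connect clP Hc) -topredE /= hv vA.
have CA : forall w, w \in C -> w \in A by move=> w /PC /andP [].
pose h1 w := if w \in C then h' w else h w.
have vC : v \in C by rewrite inE connect0.
have hh1 : coloring e h1.
  have mix : forall x y, e x y -> x \in C -> y \notin C -> h1 x != h1 y.
    move=> x y exy xC yC; rewrite /h1 xC (negbTE yC).
    have xA0 := CA _ xC.
    have yA : y \notin A.
      apply: contra yC => yA; move: xC; rewrite !inE => xC.
      apply: connect_trans xC (connect1 _); by rewrite /= exy xA0 yA.
    move: xA0; rewrite !inE => xA.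
    have xA' : inij i j (h' x) by rewrite -Hin.
    by apply: contra yA => /eqP hxy; rewrite inE -hxy.
  move=> x y exy; case xC: (x \in C); case yC: (y \in C).
  - by rewrite /h1 xC yC; apply: hh'.
  - by apply: mix => //; rewrite yC.
  - rewrite eq_sym; apply: mix; [by rewrite e_sym | by [] | by rewrite xC].
  - by rewrite /h1 xC yC; apply: hh.
have sw : kempe_switch e h h1.
  exists i, j, C; split => //.
    by exists v => //.
  move=> w; rewrite /h1; case: ifP => // wC.
  have /andP [nw wA] := PC _ wC.
  have wA' : inij i j (h' w) by rewrite -Hin; move: wA; rewrite inE.
  rewrite inE in wA; rewrite /inij in wA'.
  case/orP: wA => /eqP hw; case/orP: wA' => /eqP hw'; rewrite hw hw' in nw *;
  by move: nw; rewrite ?eqxx ?(eq_sym j i) ?(negbTE nij).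
refine (kempe_step hh hh1 sw _).
apply: IH => //.
- rewrite -ltnS; apply: leq_trans hN; apply: proper_card; apply/properP; split.
    apply/subsetP => w; rewrite !inE /h1; case: ifP => //; by rewrite eqxx.
  by exists v; rewrite !inE /h1 ?vC ?eqxx.
- move=> w; rewrite /h1; case: ifP => //.
- move=> w; rewrite /h1; case: ifP => // _; exact: Hout.
Qed.


Lemma inijC (i j x : 'I_k) : inij j i x = inij i j x.
Proof. by rewrite /inij orbC. Qed.

Lemma recolor (i j : 'I_k) (h h' : 'I_d -> 'I_k) : i != j ->
  coloring e h -> coloring e h' ->
  (forall v, inij i j (h v) = inij i j (h' v)) ->
  (forall v, ~~ inij i j (h v) -> h' v = h v) -> kempe_equiv e h h'.
Proof.
move=> nij hh hh' H1 H2.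
case: (ltngtP i j) => [lt|lt|/val_inj eij]; last by rewrite eij eqxx in nij.
  exact: (recolor_lt lt (leqnn _)).
apply: (recolor_lt lt (leqnn _) hh hh') => v; rewrite !(inijC i j); [exact: H1 | exact: H2].
Qed.

Definition cls (h : 'I_d -> 'I_k) (l : 'I_k) := [set v | h v == l].

Lemma perm_kempe N (h g : 'I_d -> 'I_k) :
  #|[set v | h v != g v]| <= N -> coloring e h -> coloring e g ->
  (forall l, exists m, cls g l = cls h m) -> kempe_equiv e h g.
Proof.
elim: N h => [|N IH] h hN hh hg Hc.
  apply: kempe_eqfun => // v; apply/eqP; move: hN; rewrite leqn0 cards_eq0.
  by move/eqP/setP => /(_ v); rewrite !inE => /negbFE.
have [S0|[v]] := set_0Vmem [set v | h v != g v].
  apply: kempe_eqfun => // w; apply/eqP; move/setP: S0 => /(_ w).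
  by rewrite !inE => /negbFE.
rewrite inE => hv.
have [m Hm] := Hc (g v).
have hvm : h v = m.
  by have := Hm; move/setP => /(_ v); rewrite !inE eqxx => /esym /eqP.
pose h1 w := tperm (h v) (g v) (h w).
have nij : h v != g v by [].
have hh1 : coloring e h1.
  by move=> x y /hh; apply: contra => /eqP /perm_inj ->.
apply: (kempe_trans (g := h1)).
  apply: (recolor (i := h v) (j := g v)) => //.
    move=> w; rewrite /h1 /inij.
    by case: (tpermP (h v) (g v) (h w)) => [->|->|]; rewrite ?eqxx ?orbT.
  move=> w; rewrite /inij negb_or => /andP [a b]; by apply: tpermD; rewrite eq_sym.
apply: IH => //.
- rewrite -ltnS; apply: leq_trans hN; apply: proper_card; apply/properP; split.
    apply/subsetP => w; rewrite !inE /h1; apply: contraR => /negbNE/eqP gw.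
    case: (tpermP (h v) (g v) (h w)) => [hw|hw|_ _]; last by rewrite gw eqxx.
    + have : w \in cls h m by rewrite inE -hvm hw.
      rewrite -Hm inE -gw hw => /eqP E; by rewrite E eqxx in nij.
    + have : w \in cls g (g v) by rewrite inE -gw hw.
      rewrite Hm inE -hvm hw => /eqP E; by rewrite E eqxx in nij.
  exists v; [by rewrite inE | by rewrite inE /h1 tpermL eqxx].
- move=> l; have [m' Hm'] := Hc l; exists (tperm (h v) (g v) m').
  rewrite Hm'; apply/setP => w; rewrite !inE /h1.
  by rewrite (inj_eq perm_inj).
Qed.

End Comb.


Section Alg.
Variables (K : fieldType) (d k : nat) (e : rel 'I_d).
Hypothesis e_sym : forall u v, e u v = e v u.

Local Notation n := #|{: stab e}|.

Lemma stableP (A : {set 'I_d}) :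
  reflect (forall u v, u \in A -> v \in A -> ~~ e u v) (stable e A).
Proof.
apply: (iffP forallP) => [H u v uA vA | H u].
  by have /implyP /(_ uA) /forallP /(_ v) /implyP /(_ vA) := H u.
apply/implyP => uA; apply/forallP => v; apply/implyP => vA; exact: H.
Qed.

Lemma stable0 : stable e set0.
Proof. by apply/stableP => u v; rewrite inE. Qed.

Definition s0 : stab e := exist _ set0 stable0.

Definition rk (A : {set 'I_d}) : 'I_n := enum_rank (insubd s0 A).

Definition cmon (A : {set 'I_d}) : 'X_{1..n} := U_(rk A)%MM.

Lemma xS_cmon A : stable e A -> xS K e A = 'X_[cmon A].
Proof.
move=> sA; rewrite /xS /cmon /rk insubT; congr ('X_[U_(enum_rank _)]).
by apply: val_inj; rewrite val_insubd sA.
Qed.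

Lemma rk_inj A B : stable e A -> stable e B -> rk A = rk B -> A = B.
Proof.
move=> sA sB /enum_rank_inj /(f_equal val); by rewrite !val_insubd sA sB.
Qed.

Lemma cmonE A x : cmon A x = (rk A == x).
Proof. by rewrite /cmon mnm1E. Qed.

Lemma cls_stable (h : 'I_d -> 'I_k) l : coloring e h -> stable e (cls h l).
Proof.
move=> hh; apply/stableP => u v; rewrite !inE => /eqP hu /eqP hv.
by apply/negP => /(hh u v); rewrite hu hv eqxx.
Qed.

Definition mono (h : 'I_d -> 'I_k) : 'X_{1..n} := (\sum_(l < k) cmon (cls h l))%MM.

Lemma xmon_mono h : coloring e h -> xmon K e h = 'X_[mono h].
Proof.
move=> hh; rewrite /xmon /mono -mprodXE; apply: eq_bigr => l _.
exact/xS_cmon/cls_stable.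
Qed.

Lemma mdeg_mono h : mdeg (mono h) = k.
Proof.
rewrite /mono mdeg_sum (eq_bigr (fun _ => 1%N)) => [|l _]; last exact: mdeg1.
by rewrite sum1_card card_ord.
Qed.

Lemma mono_cls h A : coloring e h -> stable e A -> (0 < mono h (rk A))%N ->
  exists l, cls h l = A.
Proof.
move=> hh sA; rewrite /mono mnm_sumE.
case: (pickP (fun l => cls h l == A)) => [l /eqP <-|H]; first by exists l.
rewrite big1 // => l _; rewrite cmonE; case: eqP => // /(rk_inj (cls_stable l hh) sA) E.
by have := H l; rewrite /= E eqxx.
Qed.

Lemma mono_split h (i j : 'I_k) : i != j ->
  mono h = (cmon (cls h i) + (cmon (cls h j) +
             \sum_(l | (l != i) && (l != j)) cmon (cls h l)))%MM.
Proof.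
move=> nij; rewrite /mono (bigD1 i) //= (bigD1 j) //= 1?eq_sym //.
Qed.


Definition Rm (f : 'I_d -> 'I_k) (m : 'X_{1..n}) : Prop :=
  exists h, [/\ coloring e h, kempe_equiv e f h & mono h = m].

Lemma R_step f t A0 A1 B0 B1 :
  stable e A0 -> stable e A1 -> stable e B0 -> stable e B1 ->
  A0 :&: A1 = set0 -> B0 :&: B1 = set0 -> A0 :|: A1 = B0 :|: B1 ->
  Rm f (t + (cmon A0 + cmon A1))%MM -> Rm f (t + (cmon B0 + cmon B1))%MM.
Proof.
move=> sA0 sA1 sB0 sB1 dA dB U.
case: (eqVneq (A0 :|: A1) set0) => [W0|W0].
  have /eqP := W0; rewrite setU_eq0 => /andP [/eqP a0 /eqP a1].
  move: W0; rewrite U => /eqP; rewrite setU_eq0 => /andP [/eqP b0 /eqP b1].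
  by rewrite a0 a1 b0 b1.
have nA : A0 != A1.
  apply: contra W0 => /eqP E; move: dA; rewrite E setIid => ->; by rewrite setUid.
case=> h [hh hk hm].
have [i Hi] : exists i, cls h i = A0.
  apply: mono_cls => //; rewrite hm !mnmDE !cmonE eqxx /=; lia.
have [j Hj] : exists j, cls h j = A1.
  apply: mono_cls => //; rewrite hm !mnmDE !cmonE eqxx /=; lia.
have nij : i != j by apply: contra nA => /eqP E; rewrite -Hi -Hj E.
have inW : forall v, inij i j (h v) = (v \in B0 :|: B1).
  by move=> v; rewrite -U -Hi -Hj !inE.
have dj : forall v, v \in B0 -> v \in B1 -> False.
  by move=> v a b; have := dB; move/setP => /(_ v); rewrite !inE a b.
pose h' v := if v \in B0 then i else if v \in B1 then j else h v.
have cases : forall v, [/\ v \in B0 & h' v = i] \/ [/\ v \in B1 & h' v = j] \/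
    [/\ v \notin B0 :|: B1, h' v = h v, h v != i & h v != j].
  move=> v; rewrite /h'; case: ifP => a; first by left.
  case: ifP => b; first by right; left.
  right; right; have := inW v; rewrite !inE a b /inij => /negbT; rewrite negb_or.
  by case/andP => -> ->.
have hh' : coloring e h'.
  move=> x y exy.
  case: (cases x) => [[xB hx]|[[xB hx]|[xB hx nxi nxj]]];
  case: (cases y) => [[yB hy]|[[yB hy]|[yB hy nyi nyj]]]; rewrite hx hy //;
  try (by have := stableP _ sB0 x y xB yB; rewrite exy);
  try (by have := stableP _ sB1 x y xB yB; rewrite exy);
  try (by rewrite eq_sym);
  exact: hh.
have hk' : kempe_equiv e h h'.
  apply: (recolor e_sym nij hh hh') => v.
    rewrite inW; case: (cases v) => [[vB hv]|[[vB hv]|[vB hv nvi nvj]]]; rewrite hv /inij ?eqxx ?orbT.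
    - by rewrite inE vB.
    - by rewrite inE vB orbT.
    - by rewrite (negbTE vB) (negbTE nvi) (negbTE nvj).
  rewrite inW => vW; case: (cases v) => [[vB hv]|[[vB hv]|[vB hv _ _]]] //.
  - by rewrite inE vB in vW.
  - by rewrite inE vB orbT in vW.
exists h'; split => //; first exact: kempe_trans hk hk'.
have C0 : cls h' i = B0.
  apply/setP => w; rewrite inE.
  case: (cases w) => [[vB hv]|[[vB hv]|[vB hv nwi _]]]; rewrite hv ?eqxx ?vB //.
  - by rewrite eq_sym (negbTE nij); case: (boolP (w \in B0)) => // /dj /(_ vB).
  - by rewrite (negbTE nwi); move: vB; rewrite inE negb_or => /andP [/negbTE].
have C1 : cls h' j = B1.
  apply/setP => w; rewrite inE.
  case: (cases w) => [[vB hv]|[[vB hv]|[vB hv _ nwj]]]; rewrite hv ?eqxx ?vB //.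
  - by rewrite (negbTE nij); case: (boolP (w \in B1)) => // /(dj _ vB).
  - by rewrite (negbTE nwj); move: vB; rewrite inE negb_or => /andP [_ /negbTE].
have Cl : forall l, l != i -> l != j -> cls h' l = cls h l.
  move=> l li lj; apply/setP => w; rewrite !inE.
  case: (cases w) => [[vB hv]|[[vB hv]|[vB hv _ _]]]; rewrite hv //.
  - have : inij i j (h w) by rewrite inW inE vB.
    by rewrite /inij => /orP [] /eqP ->; rewrite ![_ == l]eq_sym ?(negbTE li) ?(negbTE lj).
  - have : inij i j (h w) by rewrite inW inE vB orbT.
    by rewrite /inij => /orP [] /eqP ->; rewrite ![_ == l]eq_sym ?(negbTE li) ?(negbTE lj).
rewrite (mono_split h nij) Hi Hj in hm.
rewrite (mono_split h' nij) C0 C1.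
set r := (\sum_(l | _) _)%MM in hm.
have -> : (\sum_(l | (l != i) && (l != j)) cmon (cls h' l))%MM = r.
  by apply: eq_bigr => l /andP [a b]; rewrite Cl.
rewrite addmA addmC in hm.
have E : r = t by rewrite -(addmK (cmon A0 + cmon A1)%MM r) hm addmK.
by rewrite addmA addmC E.
Qed.

Local Open Scope ring_scope.

Definition Rb f m : bool := if excluded_middle_informative (Rm f m) then true else false.

Lemma RbP f m : Rb f m <-> Rm f m.
Proof. by rewrite /Rb; case: excluded_middle_informative. Qed.

Lemma Rm_deg f m : Rm f m -> (mdeg m < k.+1)%N.
Proof. by case=> h [_ _ <-]; rewrite mdeg_mono. Qed.

Definition phi f (p : {mpoly K[n]}) : K :=
  \sum_(m : 'X_{1..n < k.+1}) (if Rb f m then p@_m else 0).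

Lemma phi0 f : phi f 0 = 0.
Proof. by apply: big1 => m _; rewrite mcoeff0; case: ifP. Qed.

Lemma phiD f p q : phi f (p + q) = phi f p + phi f q.
Proof.
rewrite /phi -big_split; apply: eq_bigr => m _ /=.
by case: ifP; rewrite ?mcoeffD ?addr0.
Qed.

Lemma phiB f p q : phi f (p - q) = phi f p - phi f q.
Proof.
rewrite /phi -sumrB; apply: eq_bigr => m _ /=.
by case: ifP; rewrite ?mcoeffB ?subr0.
Qed.

Lemma phiZ f c p : phi f (c *: p) = c * phi f p.
Proof.
rewrite /phi mulr_sumr; apply: eq_bigr => m _ /=.
by case: ifP; rewrite ?mcoeffZ ?mulr0.
Qed.

Lemma phi_sum f I (r : seq I) (F : I -> {mpoly K[n]}) :
  phi f (\sum_(i <- r) F i) = \sum_(i <- r) phi f (F i).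
Proof. exact: (big_morph _ (phiD f) (phi0 f)). Qed.

Lemma phiX f m : phi f 'X_[m] = (Rb f m)%:R.
Proof.
case Em: (Rb f m).
  have dm := Rm_deg (iffLR (RbP f m) Em).
  rewrite /phi (bigD1 (BMultinom dm)) //= Em mcoeffX eqxx big1 ?addr0 // => m' ne.
  case: ifP => // _; rewrite mcoeffX; case: eqP => // E.
  by move: ne; rewrite -(inj_eq val_inj) /= E eqxx.
apply: big1 => m' _; case: ifP => // Rm'; rewrite mcoeffX; case: eqP => // E.
by rewrite E Rm' in Em.
Qed.

Lemma I2_lift (x : 'I_2) : (x == lift ord0 ord0) = (x != ord0).
Proof. by case: x => [[|[|]]]. Qed.

Lemma on2_stable (W : {set 'I_d}) (f2 : 'I_d -> 'I_2) l : coloring_on e W f2 ->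
  stable e [set v in W | f2 v == l].
Proof.
move=> hf; apply/stableP => u v; rewrite !inE => /andP [uW /eqP hu] /andP [vW /eqP hv].
by apply/negP => /(hf u v uW vW); rewrite hu hv eqxx.
Qed.

Lemma xmon_on2 (W : {set 'I_d}) (f2 : 'I_d -> 'I_2) : coloring_on e W f2 ->
  xmon_on K e W f2 = 'X_[cmon [set v in W | f2 v == ord0] +
                         cmon [set v in W | f2 v == lift ord0 ord0]].
Proof.
move=> hf; rewrite /xmon_on big_ord_recl big_ord1 mpolyXD !xS_cmon //;
exact: on2_stable.
Qed.

Lemma on2_union (W : {set 'I_d}) (f2 : 'I_d -> 'I_2) :
  [set v in W | f2 v == ord0] :|: [set v in W | f2 v == lift ord0 ord0] = W.
Proof.
apply/setP => v; rewrite !inE I2_lift -andb_orr orbN andbT //.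
Qed.

Lemma on2_disj (W : {set 'I_d}) (f2 : 'I_d -> 'I_2) :
  [set v in W | f2 v == ord0] :&: [set v in W | f2 v == lift ord0 ord0] = set0.
Proof.
apply/setP => v; rewrite !inE I2_lift.
by case: (f2 v == ord0); rewrite ?andbF ?andbT ?andbN.
Qed.

Lemma phi_gen f (W : {set 'I_d}) (f2 g2 : 'I_d -> 'I_2) c :
  coloring_on e W f2 -> coloring_on e W g2 ->
  phi f (c * (xmon_on K e W f2 - xmon_on K e W g2)) = 0.
Proof.
move=> hf hg; rewrite (xmon_on2 hf) (xmon_on2 hg).
set A0 := [set v in W | f2 v == ord0].
set A1 := [set v in W | f2 v == lift ord0 ord0].
set B0 := [set v in W | g2 v == ord0].
set B1 := [set v in W | g2 v == lift ord0 ord0].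
have sA0 : stable e A0 by exact: on2_stable.
have sA1 : stable e A1 by exact: on2_stable.
have sB0 : stable e B0 by exact: on2_stable.
have sB1 : stable e B1 by exact: on2_stable.
have U : A0 :|: A1 = B0 :|: B1 by rewrite !on2_union.
rewrite {1}(mpolyE c) mulr_suml phi_sum; apply: big1 => t _.
rewrite -scalerAl phiZ mulrBr -!mpolyXD phiB !phiX.
have -> : Rb f (t + (cmon A0 + cmon A1)) = Rb f (t + (cmon B0 + cmon B1)).
  apply/idP/idP => /RbP H; apply/RbP.
    exact: (R_step sA0 sA1 sB0 sB1 (on2_disj _ _) (on2_disj _ _) U).
  exact: (R_step sB0 sB1 sA0 sA1 (on2_disj _ _) (on2_disj _ _) (esym U)).
by rewrite subrr mulr0.
Qed.

End Alg.


Local Open Scope ring_scope.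

Lemma in_ideal0 (R : comRingType) (P : R -> Prop) : in_ideal P 0.
Proof. exists 0%N, (fun _ => 0), (fun _ => 0); split; [by case | by rewrite big_ord0]. Qed.

Lemma in_ideal1 (R : comRingType) (P : R -> Prop) c x : P x -> in_ideal P (c * x).
Proof. move=> Px; exists 1%N, (fun _ => c), (fun _ => x); split => //; by rewrite big_ord1. Qed.

Lemma in_idealD (R : comRingType) (P : R -> Prop) p q :
  in_ideal P p -> in_ideal P q -> in_ideal P (p + q).
Proof.
case=> n1 [c1 [g1 [H1 ->]]] [n2 [c2 [g2 [H2 ->]]]].
exists (n1 + n2)%N, (fun i => match split i with inl a => c1 a | inr b => c2 b end),
  (fun i => match split i with inl a => g1 a | inr b => g2 b end).
split; first by move=> i; case: (split i).
rewrite big_split_ord /=; congr (_ + _); apply: eq_bigr => i _.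
  by have -> : split (lshift n2 i) = inl i := unsplitK (inl i).
by have -> : split (rshift n1 i) = inr i := unsplitK (inr i).
Qed.

Section Fwd.
Variables (K : fieldType) (d k : nat) (e : rel 'I_d).
Hypothesis e_sym : forall u v, e u v = e v u.

Lemma xmon_split (h : 'I_d -> 'I_k) (i j : 'I_k) : i != j ->
  xmon K e h = xS K e (cls h i) * (xS K e (cls h j) *
             \prod_(l | (l != i) && (l != j)) xS K e (cls h l)).
Proof.
move=> nij; rewrite /xmon (bigD1 i) //= (bigD1 j) //= 1?eq_sym //.
Qed.

Lemma two_cls (h : 'I_d -> 'I_k) (i j : 'I_k) (W : {set 'I_d}) :
  i != j -> coloring e h -> (forall w, inij i j (h w) = (w \in W)) ->
  let h2 := fun w => if h w == i then ord0 else lift ord0 (ord0 : 'I_1) in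
  coloring_on e W h2 /\ xmon_on K e W h2 = xS K e (cls h i) * xS K e (cls h j).
Proof.
move=> nij hh hW h2; split.
  move=> u v uW vW euv; have := hh u v euv.
  rewrite -hW /inij in uW; rewrite -hW /inij in vW; rewrite /h2.
  by case/orP: uW => /eqP ->; case/orP: vW => /eqP ->; rewrite ?eqxx ?(negbTE nij) ?(eq_sym j i) ?(negbTE nij).
rewrite /xmon_on big_ord_recl big_ord1; congr (xS _ _ _ * xS _ _ _).
  apply/setP => w; rewrite !inE -hW /h2 /inij.
  by case: (h w == i); rewrite //= andbF.
apply/setP => w; rewrite !inE -hW /h2 /inij.
case: (eqVneq (h w) i) => [->|hi] /=; first by rewrite eq_sym (negbTE nij).
by rewrite andbT.
Qed.

Lemma switch_J (f g : 'I_d -> 'I_k) : coloring e f -> coloring e g ->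
  kempe_switch e f g -> J_G K e (xmon K e f - xmon K e g).
Proof.
move=> hf hg [i [j [C [lij [v vA defC] Hg]]]].
set W := [set v | (f v == i) || (f v == j)] in vA defC.
have nij : i != j by rewrite neq_ltn lij.
pose rA := [rel x y | [&& e x y, x \in W & y \in W]].
have clW : closed rA (mem W).
  by move=> x y /= /and3P [_ -> ->].
have CW : forall w, w \in C -> w \in W.
  move=> w; rewrite defC inE => /(closed_connect clW) E; move: vA; first [by rewrite E | by rewrite -!topredE /= E | by move: E; rewrite !unfold_in => ->].
have fW : forall w, inij i j (f w) = (w \in W) by move=> w; rewrite inE.
have gW : forall w, inij i j (g w) = (w \in W).
  move=> w; rewrite Hg; case: ifP => wC; last exact: fW.
  by rewrite (CW _ wC) /inij; case: ifP => _; rewrite eqxx ?orbT.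
have Cl : forall l, l != i -> l != j -> cls g l = cls f l.
  move=> l li lj; apply/setP => w; rewrite !inE Hg; case: ifP => // wC.
  have := CW _ wC; rewrite -fW /inij => /orP [] /eqP ->; rewrite ?eqxx ?(eq_sym j i) ?(negbTE nij) /=;
  by rewrite ![_ == l]eq_sym ?(negbTE li) ?(negbTE lj).
have [cf ef] := two_cls nij hf fW.
have [cg eg] := two_cls nij hg gW.
rewrite (xmon_split f nij) (xmon_split g nij).
set r := \prod_(l | _) _.
have -> : \prod_(l | (l != i) && (l != j)) xS K e (cls g l) = r.
  by apply: eq_bigr => l /andP [a b]; rewrite Cl.
rewrite !mulrA -!ef -!eg -mulrBl mulrC; apply: in_ideal1.
by exists W, (fun w => if f w == i then ord0 else lift ord0 (ord0 : 'I_1)),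
  (fun w => if g w == i then ord0 else lift ord0 (ord0 : 'I_1)); split.
Qed.

End Fwd.


Lemma rev_dir (K : fieldType) (d : nat) (e : rel 'I_d)
  (e_sym : forall u v, e u v = e v u) (k : nat)
  (f g : 'I_d -> 'I_k) (hf : coloring e f) (hg : coloring e g) :
  J_G K e (xmon K e f - xmon K e g) -> kempe_equiv e f g.
Proof.
case=> N [c [gs [Hg E]]].
have : phi (e:=e) f (xmon K e f - xmon K e g) = 0.
  rewrite E phi_sum; apply: big1 => i _.
  have [W [f2 [g2 [h1 h2 ->]]]] := Hg i; exact: (phi_gen e_sym).
rewrite phiB !xmon_mono // !phiX.
have Rf : Rb (e:=e) f (mono e f).
  by apply/RbP; exists f; split => //; apply: kempe_refl.
rewrite Rf; case Rg: (Rb (e:=e) f (mono e g)); last first.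
  by rewrite subr0 => /eqP; rewrite oner_eq0.
move=> _; move/RbP: Rg => [h [hh hk hm]].
apply: (kempe_trans hk); apply: (perm_kempe e_sym (leqnn _)) => // l.
have [m Hm] : exists m, cls h m = cls g l.
  apply: (mono_cls hh (cls_stable l hg)).
  by rewrite hm /mono mnm_sumE (bigD1 l) //= cmonE eqxx.
by exists m.
Qed.

Theorem theorem1p1 (K : fieldType) (d : nat) (e : rel 'I_d)
  (e_sym : forall u v, e u v = e v u) (e_irr : irreflexive e) (k : nat) (hk : (0 < k)%N)
  (f g : 'I_d -> 'I_k) (hf : coloring e f) (hg : coloring e g) :
  kempe_equiv e f g <-> J_G K e (xmon K e f - xmon K e g).
Proof.
split; last exact: rev_dir.
clear hf hg; elim=> [f0 _|f0 g0 h0 hf0 hg0 sw _ IH].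
  by rewrite subrr; apply: in_ideal0.
have -> : xmon K e f0 - xmon K e h0 = (xmon K e f0 - xmon K e g0) + (xmon K e g0 - xmon K e h0).
  by rewrite addrA subrK.
apply: in_idealD IH; exact: switch_J.
Qed.
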